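(* Let $n\ge2$ and let $P(x)=a_0+a_1x+\dots+a_nx^n\in\mathbb{Z}[x]$ with $a_n\neq0$ and $\max_i|a_i|=|a_n|$. Let $Q>1$ and suppose there exist $w,\kappa,\eta\in\mathbb{R}$ with $w>0$, $-\frac w2<\eta<\frac w2$, and an interval $J$ with $|J|\gg Q^{-\frac w2-\eta}$ such that $r(P)=Q^{-\kappa}$ and $|P(x)|<|a_n|Q^{-w}$ for all $x\in J$. Then the discriminant of $P$ satisfies $$|D(P)|\ll |a_n|^{2n-2}\,Q^{-w-(n-1)(n-2)\kappa+2\eta}.$$
   Context: $r(P)$ denotes the largest distance between two (complex) roots of $P$; $D(P)$ is the discriminant of $P$. The notation $A\ll B$ means $A\le cB$ for a constant $c>0$ depending only on $n$ and on the implied constant in the hypothesis $|J|\gg Q^{-w/2-\eta}$ (not on $P$, $Q$, $w$, $\kappa$, $\eta$). *)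

(* Defs.v *)
From HB Require Import structures.
From mathcomp Require Import all_boot all_order all_algebra.
From mathcomp Require Import reals exp.
From mathcomp.real_closed Require Import complex.
Set Implicit Arguments. Unset Strict Implicit. Unset Printing Implicit Defensive.
Import Order.TTheory GRing.Theory Num.Theory.
Local Open Scope ring_scope.

Definition cabs {R : rcfType} (z : R[i]) : R := ComplexField.Normc.normc z.

Definition polyZ (S : nzRingType) (P : {poly int}) : {poly S} :=
  map_poly (fun z : int => z%:~R) P.

(* rs is the list of complex roots of P, counted with multiplicity:
   P = a_n * prod_(a in rs) (X - a) over C *)
Definition roots_list {R : rcfType} (P : {poly int}) (rs : seq R[i]) : Prop :=
  polyZ R[i] P = (lead_coef P)%:~R *: \prod_(a <- rs) ('X - a%:P).

Definition root_sep {R : rcfType} (rs : seq R[i]) : R :=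
  \big[Num.max/0]_(a <- rs) \big[Num.max/0]_(b <- rs) cabs (a - b).

Definition discr {R : rcfType} (P : {poly int}) (rs : seq R[i]) : R[i] :=
  (lead_coef P)%:~R ^+ (2 * (size P).-1 - 2) *
  \prod_(i < size rs) \prod_(j < size rs | (i < j)%N) (rs`_i - rs`_j) ^+ 2.

(* Main.v *)
Require Import Defs.
From HB Require Import structures.
From mathcomp Require Import all_boot all_order all_algebra.
From mathcomp Require Import reals exp.
From mathcomp.real_closed Require Import complex.
From mathcomp Require Import ring lra zify.
Import Order.TTheory GRing.Theory Num.Theory.
Local Open Scope ring_scope.

Section H.
Variable R : rcfType.
Implicit Types z w : R[i].

Lemma cabs_ge0 z : 0 <= cabs z.
Proof. by case: z => a b; rewrite /cabs /= sqrtr_ge0. Qed.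

Lemma cabsM z w : cabs (z * w) = cabs z * cabs w.
Proof. exact: ComplexField.Normc.normcM. Qed.

Lemma cabsD z w : cabs (z + w) <= cabs z + cabs w.
Proof. exact: le_normcD. Qed.

Lemma cabsN z : cabs (- z) = cabs z.
Proof. exact: normcN. Qed.

Lemma cabsB z w : cabs (z - w) = cabs (w - z).
Proof. by rewrite -cabsN opprB. Qed.

Lemma cabs1 : cabs (1 : R[i]) = 1.
Proof. exact: ComplexField.Normc.normc1. Qed.

Lemma cabsX z k : cabs (z ^+ k) = cabs z ^+ k.
Proof. elim: k => [|k IH]; by rewrite ?expr0 ?cabs1 // !exprS cabsM IH. Qed.

Lemma cabs_prod (I : Type) (s : seq I) (P : pred I) (F : I -> R[i]) :
  cabs (\prod_(i <- s | P i) F i) = \prod_(i <- s | P i) cabs (F i).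
Proof.
elim: s => [|x s IH]; first by rewrite !big_nil cabs1.
rewrite !big_cons; case: (P x) => //; by rewrite cabsM IH.
Qed.

Lemma Re_le_cabs z : `|complex.Re z| <= cabs z.
Proof.
case: z => a b; rewrite /cabs /=.
rewrite -sqrtr_sqr ler_sqrt ?addr_ge0 ?sqr_ge0 //.
by rewrite lerDl sqr_ge0.
Qed.

Lemma cabs_real (x : R) : cabs (x%:C)%C = `|x|.
Proof. by rewrite /cabs /= expr0n /= addr0 sqrtr_sqr. Qed.

Lemma cabs_intr (k : int) : cabs (k%:~R : R[i]) = `|(k%:~R : R)|.
Proof.
have -> : (k%:~R : R[i]) = ((k%:~R : R)%:C)%C by rewrite rmorph_int.
exact: cabs_real.
Qed.
End H.

Lemma pick_point (R : realFieldType) (ts : seq R) (a b : R) : a < b ->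
  exists x, a < x < b /\ forall t, t \in ts -> b - a <= 6 * 3 ^+ (size ts) * `|x - t|.
Proof.
elim: ts a b => [|t ts IH] a b ab.
  exists ((a + b) / 2); split; first by apply/andP; split; lra.
  by move=> t; rewrite in_nil.
have [tl|tg] := lerP t ((a + b) / 2).
  have [|x [/andP[x1 x2] H]] := IH (a + 2 * (b - a) / 3) b; first lra.
  exists x; split; first by apply/andP; split; lra.
  move=> u; rewrite in_cons => /orP[/eqP->|ut].
    rewrite /= exprS; have p1 : 1 <= 3 ^+ size ts :> R by rewrite exprn_ege1 //; lra.
    rewrite ger0_norm; last lra.
    have : 0 <= x - t by lra.
    nra.
  have := H u ut; rewrite /= exprS; have : 0 <= `|x - u| by [].
  have p1 : 1 <= 3 ^+ size ts :> R by rewrite exprn_ege1 //; lra.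
  nra.
have [|x [/andP[x1 x2] H]] := IH a (a + (b - a) / 3); first lra.
exists x; split; first by apply/andP; split; lra.
move=> u; rewrite in_cons => /orP[/eqP->|ut].
  rewrite /= exprS; have p1 : 1 <= 3 ^+ size ts :> R by rewrite exprn_ege1 //; lra.
  rewrite ler0_norm; last lra.
  have : 0 <= t - x by lra.
  nra.
have := H u ut; rewrite /= exprS; have : 0 <= `|x - u| by [].
have p1 : 1 <= 3 ^+ size ts :> R by rewrite exprn_ege1 //; lra.
nra.
Qed.

Lemma card_two (m : nat) (i k : 'I_m) : i != k ->
  #|[pred j : 'I_m | (i != j) && (j != k)]| = (m - 2)%N.
Proof.
move=> ik.
have h1 : #|[pred j : 'I_m | i != j]| = m.-1.
  have := cardC1 i; rewrite card_ord => <-; apply: eq_card => j; by rewrite !inE eq_sym.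
have := cardD1 k [pred j : 'I_m | i != j].
rewrite h1 !inE ik /= => h2.
have -> : #|[pred j : 'I_m | (i != j) && (j != k)]| = #|[predD1 [pred j : 'I_m | i != j] & k]|.
  by apply: eq_card => j; rewrite !inE andbC.
have h3 : m.-1 = (1 + #|[predD1 [pred j : 'I_m | i != j] & k]|)%N by exact: h2.
lia.
Qed.

Lemma pairs_bound (R : realDomainType) (m : nat) (d : 'I_m -> 'I_m -> R) (r : R) (k : 'I_m) :
  (forall i j, 0 <= d i j) -> (forall i j, d i j = d j i) -> (forall i j, d i j <= r) ->
  \prod_(i < m) \prod_(j < m | (i < j)%N) d i j ^+ 2 <=
  (\prod_(j < m | k != j) d k j) ^+ 2 * r ^+ ((m - 1) * (m - 2)).
Proof.
move=> d0 ds dr.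
have r0 : 0 <= r by apply: le_trans (dr k k).
have E1 : \prod_(i < m) \prod_(j < m | (i < j)%N) d i j ^+ 2 =
          \prod_(i < m) \prod_(j < m | i != j) d i j.
  transitivity (\prod_(i < m) \prod_(j < m | (i < j)%N) d i j *
                \prod_(i < m) \prod_(j < m | (i < j)%N) d j i).
    rewrite -big_split /=; apply: eq_bigr => i _.
    rewrite -big_split /=; apply: eq_bigr => j _; by rewrite expr2 {2}ds.
  rewrite [X in _ * X](exchange_big_dep xpredT) //= -big_split /=; apply: eq_bigr => i _.
  rewrite [RHS](bigID (fun j : 'I_m => (i < j)%N)) /=; congr (_ * _).
    apply: eq_bigl => j; rewrite -val_eqE /=; lia.
  apply: eq_bigl => j; rewrite -val_eqE /=; lia.
rewrite E1 (bigD1 k) //= expr2 -mulrA ler_wpM2l //; first by apply: prodr_ge0.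
have E2 : forall i, i != k -> \prod_(j < m | i != j) d i j <= d k i * r ^+ (m - 2).
  move=> i ik; rewrite (bigD1 k) //= ds ler_wpM2l //.
  rewrite -(@card_two _ i k ik) -prodr_const.
  apply: ler_prod => j _; by rewrite d0 dr.
apply: (le_trans (y := \prod_(i < m | i != k) (d k i * r ^+ (m - 2)))).
  apply: ler_prod => i ik; rewrite E2 // andbT; apply: prodr_ge0 => j _; exact: d0.
rewrite big_split /= prodr_const.
have -> : #|[pred i : 'I_m | i != k]| = m.-1.
  have := cardC1 k; rewrite card_ord => <-; by apply: eq_card => j; rewrite !inE.
rewrite -exprM; have -> : ((m - 2) * m.-1 = (m - 1) * (m - 2))%N by lia.
apply: ler_wpM2r; first by apply: exprn_ge0.
rewrite le_eqVlt; apply/orP; left; apply/eqP; apply: eq_bigl => j; by rewrite eq_sym.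
Qed.

Theorem lemma4 (R : realType) (n : nat) (hn : (2 <= n)%N) (c : R) (hc : 0 < c) :
  exists C : R, 0 < C /\
  forall (P : {poly int}) (rs : seq R[i]) (Q w kappa eta a b : R),
    size P = n.+1 ->
    (forall i : nat, `|P`_i| <= `|lead_coef P|) ->
    roots_list P rs ->
    1 < Q ->
    0 < w -> - (w / 2) < eta -> eta < w / 2 ->
    a < b ->
    b - a >= c * powR Q (- (w / 2) - eta) ->
    root_sep rs = powR Q (- kappa) ->
    (forall x : R, a < x < b ->
        `|(polyZ R P).[x]| < `|(lead_coef P)%:~R| * powR Q (- w)) ->
    cabs (discr P rs) <=
      C * `|(lead_coef P)%:~R : R| ^+ (2 * n - 2) *
      powR Q (- w - ((n - 1) * (n - 2))%:R * kappa + 2 * eta).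
Proof.
set K := (2 ^+ (n - 1) * 6 * 3 ^+ n : R).
have K0 : 0 < K by rewrite /K !mulr_gt0 ?exprn_gt0 //.
exists ((K / c) ^+ 2); split; first by rewrite exprn_gt0 // divr_gt0.
move=> P rs Q w kappa eta a b sP _ + Q1 w0 e1 e2 ab hL hr hsmall.
rewrite /roots_list => hroots.
set lc := lead_coef P.
have lc0 : lc != 0 by rewrite lead_coef_eq0 -size_poly_eq0 sP.
have srs : size rs = n.
  have : size (polyZ R[i] P) = size ((lc%:~R : R[i]) *: \prod_(a <- rs) ('X - a%:P)) by rewrite hroots.
  rewrite size_scale ?intr_eq0 // size_prod_XsubC /polyZ size_map_poly_id0 ?sP.
    by case.
  by rewrite intr_eq0.
subst n.
set m := size rs.
have lcR : (0 : R) < `|(lc%:~R : R)| by rewrite normr_gt0 intr_eq0.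
have [x [/andP[xa xb] hx]] := @pick_point _ (map (@complex.Re R) rs) a b ab.
rewrite size_map -/m in hx.
set u := fun i : 'I_m => cabs ((x%:C)%C - rs`_i).
have u0 : forall i, 0 <= u i by move=> i; exact: cabs_ge0.
have hu : forall i : 'I_m, b - a <= 6 * 3 ^+ m * u i.
  move=> i; apply: le_trans (hx _ (map_f _ (mem_nth 0 (ltn_ord i)))) _.
  apply: ler_wpM2l; first by rewrite mulr_ge0 ?exprn_ge0.
  rewrite /u; have := @Re_le_cabs _ ((x%:C)%C - rs`_i).
  by case: (rs`_i) => p q /=.
have hP : `|(polyZ R P).[x]| = `|(lc%:~R : R)| * \prod_(i < m) u i.
  have e : ((polyZ R P).[x]%:C)%C = (polyZ R[i] P).[(x%:C)%C].
    rewrite /polyZ -horner_map /= -map_poly_comp; congr (_.[_]).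
    by apply: eq_map_poly => z /=; rewrite rmorph_int.
  rewrite -cabs_real e hroots hornerZ horner_prod cabsM cabs_intr cabs_prod (big_nth 0) big_mkord.
  congr (_ * _); apply: eq_bigr => i _; by rewrite hornerXsubC.
have hU : \prod_(i < m) u i < powR Q (- w).
  have xab : a < x < b by rewrite xa xb.
  have := hsmall x xab; rewrite hP -/lc => h.
  by rewrite -(ltr_pM2l lcR).
have m0 : (0 < m)%N by apply: leq_trans hn.
pose i0 : 'I_m := Ordinal m0.
have [k _ hk] := @arg_minP _ R 'I_m i0 xpredT u isT.
set d := fun i j : 'I_m => cabs (rs`_i - rs`_j).
have d0 : forall i j, 0 <= d i j by move=> i j; exact: cabs_ge0.
have ds : forall i j, d i j = d j i by move=> i j; exact: cabsB.
have dr : forall i j, d i j <= powR Q (- kappa).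
  move=> i j; rewrite -hr /root_sep.
  apply: le_trans (le_bigmax_seq 0 (rs`_i) xpredT _ (mem_nth 0 (ltn_ord i)) isT).
  exact: (le_bigmax_seq 0 (rs`_j) xpredT (fun b => cabs (rs`_i - b)) (mem_nth 0 (ltn_ord j)) isT).
have hD : cabs (discr P rs) =
    `|(lc%:~R : R)| ^+ (2 * m - 2) * \prod_(i < m) \prod_(j < m | (i < j)%N) d i j ^+ 2.
  rewrite /discr cabsM cabsX cabs_intr sP /= cabs_prod; congr (_ * _).
  apply: eq_bigr => i _; rewrite cabs_prod; apply: eq_bigr => j _; by rewrite cabsX.
have Dbound := @pairs_bound _ m d _ k d0 ds dr.
set X := \prod_(j < m | k != j) d k j in Dbound.
set Y := \prod_(j < m | k != j) u j.
have Y0 : 0 <= Y by apply: prodr_ge0.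
have X0 : 0 <= X by apply: prodr_ge0.
have hX : X <= 2 ^+ (m - 1) * Y.
  have -> : (2 ^+ (m - 1) : R) = \prod_(j < m | k != j) 2.
    rewrite prodr_const; congr (_ ^+ _).
    rewrite subn1.
    have := cardC1 k; rewrite card_ord => <-.
    by apply: eq_card => j; rewrite !inE eq_sym.
  rewrite /Y -big_split /=; apply: ler_prod => j _; rewrite d0 /=.
  have : d k j <= u k + u j.
    rewrite /d /u.
    have -> : rs`_k - rs`_j = ((x%:C)%C - rs`_j) - ((x%:C)%C - rs`_k) by rewrite opprB [RHS]addrC addrA subrK.
    by apply: le_trans (@cabsD _ _ _) _; rewrite cabsN addrC.
  move=> h; apply: le_trans h _.
  by rewrite mulr_natl mulr2n lerD2r; exact: hk j isT.
have hUk : \prod_(i < m) u i = u k * Y.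
  rewrite (bigD1 k) //=; congr (_ * _); apply: eq_bigl => j; by rewrite eq_sym.
set A := powR Q (- (w / 2) - eta).
set B := powR Q (- (w / 2) + eta).
have Q0 : 0 < Q by lra.
have A0 : 0 < A by apply: powR_gt0.
have B0 : 0 < B by apply: powR_gt0.
have AB : powR Q (- w) = A * B.
  rewrite /A /B -powRD; first by congr (_ `^ _); lra.
  by apply/implyP => _; rewrite gt_eqF.
have hY : c * Y <= 6 * 3 ^+ m * B.
  have h1 : c * A * Y <= (b - a) * Y by apply: ler_wpM2r.
  have h2 : (b - a) * Y <= 6 * 3 ^+ m * u k * Y by apply: ler_wpM2r => //; exact: hu.
  have h3 : u k * Y < A * B by rewrite -hUk -AB.
  have h4 : 6 * 3 ^+ m * (u k * Y) <= 6 * 3 ^+ m * (A * B).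
    by apply: ler_wpM2l; [rewrite mulr_ge0 ?exprn_ge0 | exact: ltW].
  rewrite -(ler_pM2r A0).
  set T := (6 * 3 ^+ m : R) in h2 h4 *.
  have : c * A * Y <= T * (A * B).
    by apply: le_trans h1 _; apply: le_trans h2 _; rewrite -mulrA.
  by rewrite mulrAC [T * B * A]mulrAC -[T * A * B]mulrA [A * B]mulrC.
set N := ((m - 1) * (m - 2))%N.
have E : Q `^ (- w - N%:R * kappa + 2 * eta) = B ^+ 2 * (Q `^ (- kappa)) ^+ N.
  rewrite -(@powR_mulrn _ B 2) ?powR_ge0 // -(@powR_mulrn _ (Q `^ (- kappa)) N) ?powR_ge0 //.
  rewrite /B -!powRrM -powRD; last by apply/implyP => _; rewrite gt_eqF.
  congr (_ `^ _); rewrite mulrDl mulNr [N%:R * kappa]mulrC; lra.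
have hY' : Y <= 6 * 3 ^+ m * B / c by rewrite ler_pdivlMr // mulrC.
have hX' : X <= K / c * B.
  apply: le_trans hX _.
  have -> : K / c * B = 2 ^+ (m - 1) * (6 * 3 ^+ m * B / c) by rewrite /K; ring.
  apply: ler_wpM2l => //; exact: exprn_ge0.
rewrite hD E.
have lce : 0 <= `|(lc%:~R : R)| ^+ (2 * m - 2) by apply: exprn_ge0; exact: ltW.
have rN : 0 <= (Q `^ (- kappa)) ^+ N by apply: exprn_ge0; exact: powR_ge0.
apply: le_trans (ler_wpM2l lce Dbound) _.
have fin : X ^+ 2 * Q `^ (- kappa) ^+ N <= (K / c) ^+ 2 * (B ^+ 2 * Q `^ (- kappa) ^+ N).
  rewrite mulrA -exprMn; apply: ler_wpM2r => //.
  rewrite !expr2; apply: ler_pM => //.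
apply: le_trans (ler_wpM2l lce fin) _.
set k1 := (K / c) ^+ 2. set k2 := `|lc%:~R| ^+ _. set k3 := B ^+ 2 * _.
by rewrite mulrCA mulrA.
Qed.
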